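(* Let $S$ be a linear subspace of $\mathbb{F}_2^n$ with basis $\xi^1,\dots,\xi^d$, and suppose that for every nonzero $m\in\mathbb{F}_2^d$ there is a position $j\in\{1,\dots,n\}$ with $(\xi^1_j,\dots,\xi^d_j)=m$. Let $Q:\mathbb{F}_2^n\to\mathbb{F}_2$ be a quadratic function. If there exist complex phases $c_1,\dots,c_n$ such that $(-1)^{Q(x)}=\prod_{j=1}^n c_j^{x_j}$ for every $x\in S$, then there exist $c'_1,\dots,c'_n\in\{\pm1,\pm i\}$ such that $(-1)^{Q(x)}=\prod_{j=1}^n (c'_j)^{x_j}$ for every $x\in S$.
   Context: A quadratic function $Q:\mathbb{F}_2^n\to\mathbb{F}_2$ is a polynomial of degree at most $2$ in the coordinates with coefficients in $\mathbb{F}_2$. Complex phases are complex numbers of modulus $1$; coordinates $x_j\in\{0,1\}$ are used as integer exponents. *)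

(* Defs.v *)
From HB Require Import structures.
From mathcomp Require Import all_boot all_order all_algebra all_field.
From mathcomp Require Import reals.
From mathcomp Require Import complex.
Set Implicit Arguments. Unset Strict Implicit. Unset Printing Implicit Defensive.
Import Order.TTheory GRing.Theory Num.Theory.
Local Open Scope ring_scope.

Definition f2nat (a : 'F_2) : nat := ((a != 0)%R : bool).

Definition quadratic (n : nat) (Q : 'rV['F_2]_n -> 'F_2) : Prop :=
  exists (c0 : 'F_2) (a : 'I_n -> 'F_2) (b : 'I_n -> 'I_n -> 'F_2),
    forall x : 'rV['F_2]_n,
      Q x = c0 + \sum_(i < n) a i * x 0 i
               + \sum_(i < n) \sum_(j < n) b i j * x 0 i * x 0 j.

Definition phase_repr (R : rcfType) (n : nat) (Q : 'rV['F_2]_n -> 'F_2)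
    (c : 'I_n -> R[i]) (x : 'rV['F_2]_n) : Prop :=
  (-1) ^+ f2nat (Q x) = \prod_(j < n) (c j) ^+ f2nat (x 0 j).

(* Main.v *)
Require Import Defs.
From HB Require Import structures.
From mathcomp Require Import all_boot all_order all_algebra all_field.
From mathcomp Require Import reals.
From mathcomp Require Import complex.
Import Order.TTheory GRing.Theory Num.Theory.
Local Open Scope ring_scope.

Lemma f2c (a : 'F_2) : a = 0 \/ a = 1.
Proof. case: a => [[|[|k]] Hk]; [left|right|]; try exact: val_inj.
exfalso. move: Hk. rewrite pdiv_id //. Qed.

Lemma f2nat0 : f2nat 0 = 0%N. Proof. by []. Qed.
Lemma f2nat1 : f2nat 1 = 1%N. Proof. by []. Qed.
Lemma f2_11 : (1 + 1 : 'F_2) = 0. Proof. by apply/eqP. Qed.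
Lemma f2_10 : (1 == 0 :> 'F_2) = false. Proof. by []. Qed.

Section Main.
Variable R : realType.
Variables (n d : nat) (xi : 'M['F_2]_(d, n)).

Local Notation Gs := ([:: 1; -1; 'i; - 'i] : seq R[i]).

Lemma ii : ('i : R[i]) * 'i = -1.
Proof. exact: sqr_i. Qed.

Lemma n1 : (-1 : R[i]) != 1. Proof. by rewrite -subr_eq0 -opprD oppr_eq0 (_ : 1 + 1 = 2%:R) ?pnatr_eq0. Qed.

Lemma inG_mul (z w : R[i]) : z \in Gs -> w \in Gs -> z * w \in Gs.
Proof.
rewrite !inE => /or4P [] /eqP -> /or4P [] /eqP ->;
rewrite ?mul1r ?mulr1 ?mulN1r ?mulrN1 ?mulrN ?mulNr ?opprK ?ii ?opprK ?inE eqxx ?orbT //.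
Qed.

Definition ph (a : 'F_2) : R[i] := (-1) ^+ f2nat a.

Lemma ph0 : ph 0 = 1. Proof. by rewrite /ph f2nat0 expr0. Qed.

Lemma phD a b : ph (a + b) = ph a * ph b.
Proof.
rewrite /ph; case: (f2c a) => ->; case: (f2c b) => ->;
rewrite ?addr0 ?add0r ?f2_11 ?f2nat0 ?f2nat1 ?expr0 ?expr1 ?mul1r ?mulr1 ?mulN1r ?opprK //.
Qed.

Lemma phM a y : ph (a * y) = ph a ^+ f2nat y.
Proof.
rewrite /ph; case: (f2c a) => ->; case: (f2c y) => ->;
rewrite ?mul0r ?mulr0 ?mul1r ?mulr1 ?f2nat0 ?f2nat1 ?expr0 ?expr1 ?expr1n //.
Qed.

Definition s (b : 'F_2) : R[i] := if b == 0 then 1 else 'i.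
Definition s' (b : 'F_2) : R[i] := if b == 0 then 1 else - 'i.

Lemma phQ b u v : ph (b * (u * v)) =
  s b ^+ f2nat u * s b ^+ f2nat v * s' b ^+ f2nat (u + v).
Proof.
rewrite /ph /s /s'; case: (f2c b) => ->; case: (f2c u) => ->; case: (f2c v) => ->;
rewrite ?eqxx ?f2_10 ?mul0r ?mulr0 ?mul1r ?mulr1 ?addr0 ?add0r ?f2_11
  ?f2nat0 ?f2nat1 ?expr0 ?expr1 ?expr1n ?mul1r ?mulr1 ?mulrN ?ii ?opprK //.
Qed.

Lemma ph_inG a : ph a \in Gs.
Proof. rewrite /ph; case: (f2c a) => ->; rewrite ?f2nat0 ?f2nat1 ?expr0 ?expr1 !inE eqxx ?orbT //. Qed.
Lemma s_inG a : s a \in Gs.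
Proof. rewrite /s; case: ifP => _; rewrite !inE eqxx ?orbT //. Qed.
Lemma s'_inG a : s' a \in Gs.
Proof. rewrite /s'; case: ifP => _; rewrite !inE eqxx ?orbT //. Qed.

Definition Rep (f : 'rV['F_2]_n -> R[i]) := exists c' : 'I_n -> R[i],
  (forall j, c' j \in Gs) /\
  forall x, (x <= xi)%MS -> f x = \prod_(j < n) c' j ^+ f2nat (x 0 j).

Lemma Rep_ext {f g} : Rep f -> (forall x, (x <= xi)%MS -> f x = g x) -> Rep g.
Proof. move=> [c [H1 H2]] H; exists c; split => // x Hx; rewrite -H //; exact: H2. Qed.

Lemma Rep_mul {f g} : Rep f -> Rep g -> Rep (fun x => f x * g x).
Proof.
move=> [c1 [H1 H2]] [c2 [G1 G2]]; exists (fun j => c1 j * c2 j); split.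
  by move=> j; apply: inG_mul.
move=> x Hx; rewrite H2 // G2 // -big_split /=; apply: eq_bigr => j _.
by rewrite exprMn.
Qed.

Lemma Rep_one : Rep (fun _ => 1).
Proof.
exists (fun _ => 1); split; first by move=> j; rewrite !inE eqxx.
by move=> x _; rewrite big1 // => j _; rewrite expr1n.
Qed.

Lemma Rep_prod (I : Type) (r : seq I) (F : I -> 'rV['F_2]_n -> R[i]) :
  (forall i, Rep (F i)) -> Rep (fun x => \prod_(i <- r) F i x).
Proof.
elim: r => [|a r IH] HF.
  by apply: Rep_ext Rep_one _ => x _; rewrite big_nil.
by apply: Rep_ext (Rep_mul (HF a) (IH HF)) _ => x _; rewrite big_cons.
Qed.

Lemma Rep_atom {z} k : z \in Gs -> Rep (fun x => z ^+ f2nat (x 0 k)).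
Proof.
move=> Hz; exists (fun j => if j == k then z else 1); split.
  by move=> j; case: ifP => _ //; rewrite !inE eqxx.
move=> x _; rewrite (bigD1 k) //= eqxx big1 ?mulr1 // => j /negbTE ->.
by rewrite expr1n.
Qed.

Lemma coordS (x : 'rV['F_2]_n) : (x <= xi)%MS ->
  exists m : 'rV['F_2]_d, forall j, x 0 j = \sum_r m 0 r * xi r j.
Proof. by case/submxP => m ->; exists m => j; rewrite mxE. Qed.

Hypothesis Hcol : forall m : 'rV['F_2]_d, m != 0 ->
  exists j : 'I_n, forall k : 'I_d, xi k j = m 0 k.

Lemma Rep_pair {z} i j : z \in Gs -> Rep (fun x => z ^+ f2nat (x 0 i + x 0 j)).
Proof.
move=> Hz; pose v := \row_r (xi r i + xi r j) : 'rV['F_2]_d.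
case: (eqVneq v 0) => [v0 | vn0].
  apply: Rep_ext Rep_one _ => x /coordS [m Hm].
  rewrite !Hm -big_split /= big1 ?f2nat0 ?expr0 // => r _.
  rewrite -mulrDr; move/rowP: v0 => /(_ r); rewrite !mxE => ->.
  by rewrite mulr0.
have [k Hk] := Hcol _ vn0.
apply: Rep_ext (Rep_atom k Hz) _ => x /coordS [m Hm].
rewrite !Hm -big_split /=; congr (_ ^+ f2nat _); apply: eq_bigr => r _.
by rewrite Hk mxE mulrDr.
Qed.

Lemma main_rep (Q : 'rV['F_2]_n -> 'F_2) c0 (a : 'I_n -> 'F_2) (b : 'I_n -> 'I_n -> 'F_2) :
  (forall x : 'rV['F_2]_n,
      Q x = c0 + \sum_(i < n) a i * x 0 i
               + \sum_(i < n) \sum_(j < n) b i j * x 0 i * x 0 j) ->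
  c0 = 0 -> Rep (fun x => ph (Q x)).
Proof.
move=> HQ Q0.
have R1 : Rep (fun _ => ph c0).
  by apply: Rep_ext Rep_one _ => x _; rewrite Q0 ph0.
have R2 : Rep (fun x => \prod_(i < n) ph (a i * x 0 i)).
  apply: Rep_prod => i; apply: Rep_ext (Rep_atom i (ph_inG (a i))) _.
  by move=> x _; rewrite phM.
have R3 : Rep (fun x => \prod_(i < n) \prod_(j < n) ph (b i j * (x 0 i * x 0 j))).
  apply: Rep_prod => i; apply: Rep_prod => j.
  apply: Rep_ext (Rep_mul (Rep_mul (Rep_atom i (s_inG (b i j)))
                     (Rep_atom j (s_inG (b i j))))
                     (Rep_pair i j (s'_inG (b i j)))) _.
  by move=> x _; rewrite phQ.
apply: Rep_ext (Rep_mul (Rep_mul R1 R2) R3) _ => x _ /=.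
rewrite HQ !phD (big_morph (ph) phD ph0); congr (_ * _).
rewrite (big_morph (ph) phD ph0); apply: eq_bigr => i _.
rewrite (big_morph (ph) phD ph0); apply: eq_bigr => j _.
by rewrite mulrA.
Qed.

End Main.

Theorem mainTheorem4 (R : realType) (n d : nat) (xi : 'M['F_2]_(d, n))
    (Q : 'rV['F_2]_n -> 'F_2) :
  row_free xi ->
  (forall m : 'rV['F_2]_d, m != 0 -> exists j : 'I_n, forall k : 'I_d, xi k j = m 0 k) ->
  quadratic Q ->
  (exists c : 'I_n -> R[i],
      (forall j, `|c j| = 1) /\
      (forall x : 'rV['F_2]_n, (x <= xi)%MS -> phase_repr Q c x)) ->
  exists c' : 'I_n -> R[i],
      (forall j, c' j \in [:: 1; -1; 'i; - 'i]) /\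
      (forall x : 'rV['F_2]_n, (x <= xi)%MS -> phase_repr Q c' x).
Proof.
move=> _ Hcol [c0 [a [b HQ]]] [c [_ Hc]].
have Q0 : c0 = 0.
  have := Hc 0 (sub0mx _ _); rewrite /phase_repr HQ.
  have -> : \sum_(i < n) a i * (0 : 'rV['F_2]_n) 0 i = 0.
    by apply: big1 => i _; rewrite mxE mulr0.
  have -> : \sum_(i < n) \sum_(j < n) b i j * (0 : 'rV['F_2]_n) 0 i * (0 : 'rV['F_2]_n) 0 j = 0.
    by apply: big1 => i _; apply: big1 => j _; rewrite !mxE !mulr0.
  rewrite !addr0 big1; last by move=> j _; rewrite mxE f2nat0 expr0.
  case: (f2c c0) => // ->; rewrite f2nat1 expr1 => H.
  by move: (n1 R); rewrite H eqxx.
have := @main_rep R n d xi Hcol Q c0 a b HQ Q0.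
move=> [c' [H1 H2]]; exists c'; split => // x Hx; exact: H2.
Qed.
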